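(* Let $(P_s)_{s\in\Gamma}$ be a family of bounded linear projections on a Banach space $X$ indexed by a directed poset $\Gamma$ such that: (1) $X=\bigcup_{s\in\Gamma}P_sX$ and each $P_sX$ is separable; (2) $s\leqslant t$ implies $P_s=P_s\circ P_t=P_t\circ P_s$; (3) whenever $s_0<s_1<\dots$ in $\Gamma$, $t=\sup_ns_n$ exists in $\Gamma$ and $P_tX=\overline{\bigcup_nP_{s_n}X}$. Then there exists a closed cofinal set $\Gamma'\subseteq\Gamma$ such that $\sup_{s\in\Gamma'}\|P_s\|<\infty$.
   Context: A subset $\Gamma'$ of a poset $\Gamma$ is cofinal if for every $s\in\Gamma$ there is $t\in\Gamma'$ with $s\leqslant t$; it is closed if $\sup_n s_n\in\Gamma'$ whenever $s_0<s_1<\dots$ is a sequence in $\Gamma'$ (whose supremum exists in $\Gamma$). *)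

(* Defs.v *)
From HB Require Import structures.
From mathcomp Require Import all_boot all_order all_algebra.
From mathcomp Require Import all_classical all_reals all_analysis.
Set Implicit Arguments. Unset Strict Implicit. Unset Printing Implicit Defensive.
Import Order.TTheory GRing.Theory Num.Theory.
Import numFieldNormedType.Exports.
Local Open Scope classical_set_scope.
Local Open Scope ring_scope.

Definition separable_set (T : topologicalType) (S : set T) : Prop :=
  exists D : set T, [/\ countable D, D `<=` S & S `<=` closure D].

Definition directed_poset (d : Order.disp_t) (G : porderType d) : Prop :=
  (exists s : G, True) /\ forall s t : G, exists u : G, (s <= u)%O /\ (t <= u)%O.

Definition cofinal (d : Order.disp_t) (G : porderType d) (G' : set G) : Prop :=
  forall s : G, exists2 t : G, G' t & (s <= t)%O.

Definition sigma_closed (d : Order.disp_t) (G : porderType d) (G' : set G) : Prop :=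
  forall (u : nat -> G), (forall n, G' (u n)) -> (forall n, (u n < u n.+1)%O) ->
  forall t : G, supremums (range u) t -> G' t.

(* Main.v *)
Require Import Defs.
From HB Require Import structures.
From mathcomp Require Import all_boot all_order all_algebra.
From mathcomp Require Import all_classical all_reals all_analysis.
From mathcomp Require Import lra.
Import Order.TTheory GRing.Theory Num.Theory.
Import numFieldNormedType.Exports.
Local Open Scope classical_set_scope.
Local Open Scope ring_scope.

Theorem proposition4p1 (R : realType) (X : completeNormedModType R)
  (d : Order.disp_t) (G : porderType d) (P : G -> {linear X -> X}) :
  directed_poset G ->
  (forall s, continuous (P s)) ->
  (forall s, P s \o P s = P s) ->
  \bigcup_(s in [set: G]) range (P s) = [set: X] ->
  (forall s, separable_set (range (P s))) ->
  (forall s t, (s <= t)%O -> P s \o P t = P s /\ P t \o P s = P s) ->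
  (forall u : nat -> G, (forall n, (u n < u n.+1)%O) ->
     exists t : G, supremums (range u) t /\
       range (P t) = closure (\bigcup_n range (P (u n)))) ->
  exists G' : set G, [/\ cofinal G', sigma_closed G' &
    exists M : R, forall s, G' s -> forall x : X, `|P s x| <= M * `|x| ].
Proof.
move=> [[s1 _] dir] Pc Pid _ _ Hle Hsup.
pose B := fun (n : nat) s => forall x, `|P s x| <= n%:R * `|x|.
have bnd : forall s, exists n : nat, B n s.
  move=> s; have /linear_boundedP := (linear_bounded_continuous (P s)).2 (Pc s).
  case=> M [_ /(_ (M + 1)) HM].
  have {}HM := HM ltac:(by rewrite ltrDl).
  exists (Num.truncn (M + 1)).+1 => x.
  apply: le_trans (HM x) _; apply: ler_wpM2r => //.
  exact: ltW (truncnS_gt _).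
case: (pselect (exists m : G, forall s, (s <= m)%O)) => [[m Hm]|hmax].
  exists [set m]; split.
  - by move=> s; exists m.
  - move=> u Hu Hinc t _; have := Hinc 0%N; rewrite (Hu 0%N) (Hu 1%N) ltxx //.
  - have [n Bn] := bnd m; exists n%:R => s -> ; exact: Bn.
have [nx Hnx] : {nx : G -> G & forall s, (s < nx s)%O}.
  apply: (@choice G G (fun s t => (s < t)%O)) => s.
  apply: contrapT => Hn; apply: hmax; exists s => t.
  apply: contrapT => Hts.
  have [v [sv tv]] := dir s t.
  apply: Hn; exists v; rewrite lt_neqAle sv andbT; apply/negP => /eqP ev.
  by apply: Hts; rewrite ev.
have [n [s0 Hc]] : exists (n : nat) s0, forall s, (s0 <= s)%O ->
    exists t, (s <= t)%O /\ B n t.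
  apply: contrapT => Hno.
  have H1 : forall n s0, exists s, (s0 <= s)%O /\ forall t, (s <= t)%O -> ~ B n t.
    move=> n s0; apply: contrapT => Hc; apply: Hno; exists n, s0 => s Hs.
    apply: contrapT => Hc2; apply: Hc; exists s; split=> // t Hst Bt.
    by apply: Hc2; exists t.
  have [f Hf] : {f : nat -> G -> G & forall n s0,
      (s0 <= f n s0)%O /\ forall t, (f n s0 <= t)%O -> ~ B n t}.
    apply: (@choice nat (G -> G) (fun n f => forall s0,
      (s0 <= f s0)%O /\ forall t, (f s0 <= t)%O -> ~ B n t)) => k.
    have [g Hg] := choice (H1 k); by exists g.
  pose u := fix u k := if k is m.+1 then f m.+1 (nx (u m)) else f 0%N s1.
  have uinc : forall k, (u k < u k.+1)%O.
    move=> k /=; exact: lt_le_trans (Hnx _) (Hf _ _).1.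
  have uB : forall k t, (u k <= t)%O -> ~ B k t.
    by case=> [|k] t /=; apply: (Hf _ _).2.
  have [t [[Hub _] _]] := Hsup u uinc.
  have [k Bk] := bnd t.
  by apply: (uB k t); [apply: Hub; exists k|].
exists [set t | (s0 <= t)%O /\ B n t]; split.
- move=> s; have [v [sv s0v]] := dir s s0.
  have [t [vt Bt]] := Hc v s0v.
  by exists t; [split=> //; exact: le_trans s0v vt | exact: le_trans sv vt].
- move=> u Hu Hinc t [Hub Hlb].
  have [t' [[Hub' Hlb'] Hr]] := Hsup u Hinc.
  have tt' : t = t' by apply/le_anti; rewrite Hlb // Hlb'.
  subst t'.
  have ult : forall k, (u k <= t)%O by move=> k; apply: Hub; exists k.
  split; first exact: le_trans (Hu 0%N).1 (ult 0%N).
  move=> x; apply/ler_addgt0Pr => e e0.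
  pose r := e / (n%:R + 1).
  have n1 : 0 < n%:R + 1 :> R by rewrite ltr_wpDl.
  have r0 : 0 < r by rewrite divr_gt0.
  have : closure (\bigcup_k range (P (u k))) (P t x) by rewrite -Hr; exists x.
  move=> /(_ (ball (P t x) r) (nbhsx_ballx _ _ r0)) [y [[k _ [w _ wy]] Hb]].
  rewrite -ball_normE /= in Hb.
  have Py : P (u k) y = y.
    by rewrite -wy; have := congr1 (fun g => g w) (Pid (u k)).
  have Pz : P (u k) (P t x) = P (u k) x.
    by have := congr1 (fun g => g x) (Hle _ _ (ult k)).1.
  set z := P t x in Hb Pz *.
  have dec : z = P (u k) z + ((z - y) - P (u k) (z - y)).
    by rewrite linearB Py opprB subrKA addrC subrK.
  have h1 : `|z| <= `|P (u k) z| + (`|z - y| + `|P (u k) (z - y)|).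
    rewrite {1}dec; apply: le_trans (ler_normD _ _) _; rewrite lerD2l.
    by apply: le_trans (ler_normB _ _) _.
  have h2 : `|P (u k) z| <= n%:R * `|x| by rewrite Pz; exact: (Hu k).2.
  have h4 : `|P (u k) (z - y)| <= n%:R * `|z - y| by exact: (Hu k).2.
  have h5 : n%:R * `|z - y| <= n%:R * r by rewrite ler_wpM2l // ltW.
  have hr0 : r * (n%:R + 1) = e by rewrite /r divfK // gt_eqF.
  have hr : n%:R * r + r = e by rewrite -hr0 mulrDr mulr1 [r * _]mulrC.
  lra.
- by exists n%:R => s [_ Bs].
Qed.
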